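(* In the oceanic model under the proportional reward sharing scheme, the Price of Stability equals $1$, for every stake distribution of the atomic players and every total mass $L\ge 0$ of non-atomic players (in particular also in the purely atomic model $L=0$).
   Context: Oceanic model: a finite set $N_a$ of atomic players, player $i$ having stake $a_i>0$, and a continuum of non-atomic players of total mass $L\ge 0$ (a measurable set of them contributes stake equal to its measure). Threshold $h>0$, and $a_i<h$ for every atomic player. Each player opens her own pool or joins one; pools partition all players. A pool $S$ has stake $m(S)$ (non-atomic mass plus atomic stakes in $S$) and reward $\rho(S)=1$ if $m(S)\ge h$ (winning), else $0$. Proportional scheme: an atomic player $i$ in pool $C$ receives $\frac{a_i}{m(C)}\rho(C)$, and non-atomic players in $C$ receive $\rho(C)/m(C)$ per unit of stake. A partition into winning pools is a Nash equilibrium if no atomic player can strictly increase her payment by moving to another pool of the partition or opening a new pool alone, and no non-atomic player can strictly increase her per-unit reward by moving to another pool (a non-atomic player is infinitesimal, so her move does not change the per-unit reward of the pool she joins). $OPT(G)$ is the maximum number of pools of stake at least $h$ in a partition of all players (games are considered with total stake at least $h$); $W(\Pi)$ is the number of winning pools of $\Pi$; the Price of Stability is $\min_\Pi OPT(G)/W(\Pi)$ over Nash equilibrium partitions. *)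

(* Defs.v *)
From HB Require Import structures.
From mathcomp Require Import all_boot all_order all_algebra.
From mathcomp Require Import reals.
Set Implicit Arguments. Unset Strict Implicit. Unset Printing Implicit Defensive.
Import Order.TTheory GRing.Theory Num.Theory.
Local Open Scope ring_scope.

(* A partition (into finitely many pools indexed by 'I_npools) is described by
   the non-atomic mass [nmass j] put in pool [j] and by the pool [pool_of i]
   joined by each atomic player [i].  Pools carrying no stake are never winning,
   so only finitely many pools can be winning and losing pools may be merged
   without decreasing the number of winning pools. *)
Record partition (R : realType) (n : nat) := Partition {
  npools : nat;
  nmass : 'I_npools -> R;
  pool_of : 'I_n -> 'I_npools }.
Arguments npools {R n} p.
Arguments nmass {R n} p j.
Arguments pool_of {R n} p i.

Section Oceanic.
Variables (R : realType) (n : nat) (a : 'I_n -> R) (L h : R).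

Definition rho (s : R) : R := if h <= s then 1 else 0.

Definition valid_partition (P : partition R n) : Prop :=
  (forall j, 0 <= nmass P j) /\ \sum_(j < npools P) nmass P j = L.

Definition stake (P : partition R n) (j : 'I_(npools P)) : R :=
  nmass P j + \sum_(i < n | pool_of P i == j) a i.
Arguments stake P j : clear implicits.

Definition nwinning (P : partition R n) : nat :=
  #|[pred j : 'I_(npools P) | h <= stake P j]|.

Definition atomic_payment (P : partition R n) (i : 'I_n) : R :=
  a i / stake P (pool_of P i) * rho (stake P (pool_of P i)).

Definition nash_eq (P : partition R n) : Prop :=
  valid_partition P /\
  (forall j, h <= stake P j) /\
  (forall (i : 'I_n) (j : 'I_(npools P)), j != pool_of P i ->
     a i / (stake P j + a i) * rho (stake P j + a i) <= atomic_payment P i) /\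
  (* atomic players: no profitable opening of a new pool alone *)
  (forall i : 'I_n, a i / a i * rho (a i) <= atomic_payment P i) /\
  (* non-atomic players (present in pools of positive non-atomic mass):
     no pool of the partition with strictly larger per-unit reward *)
  (forall j j' : 'I_(npools P), 0 < nmass P j ->
     rho (stake P j') / stake P j' <= rho (stake P j) / stake P j).

Definition is_OPT (k : nat) : Prop :=
  (exists P, valid_partition P /\ nwinning P = k) /\
  (forall P, valid_partition P -> (nwinning P <= k)%N).

Definition PoS_is (opt : nat) (r : R) : Prop :=
  (exists P, nash_eq P /\ opt%:R / (nwinning P)%:R = r) /\
  (forall P, nash_eq P -> r <= opt%:R / (nwinning P)%:R).

End Oceanic.

(* Main.v *)
Require Import Defs.
From HB Require Import structures.
From mathcomp Require Import all_boot all_order all_algebra.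
From mathcomp Require Import reals.
From mathcomp Require Import ring lra.
From Stdlib Require Import Classical ClassicalEpsilon.
Import Order.TTheory GRing.Theory Num.Theory.
Local Open Scope ring_scope.

Lemma total_stake (R : realType) (n : nat) (a : 'I_n -> R) (P : Defs.partition R n) :
  \sum_(j < npools P) stake a j = \sum_(j < npools P) nmass P j + \sum_i a i.
Proof.
rewrite /stake big_split /=; congr (_ + _).
by rewrite [RHS](partition_big (pool_of P) predT).
Qed.

Lemma win_bound (R : realType) (n : nat) (a : 'I_n -> R) (L h : R) (P : Defs.partition R n) :
  (forall i, 0 <= a i) -> valid_partition L P ->
  (nwinning a h P)%:R * h <= L + \sum_i a i.
Proof.
move=> a0 [m0 mS].
have s0 : forall j : 'I_(npools P), 0 <= stake a j.
  by move=> j; rewrite /stake; apply: addr_ge0 => //; apply: sumr_ge0.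
rewrite -mS -total_stake (bigID (fun j => h <= stake a j)) /=.
apply: (@le_trans _ _ (\sum_(j < npools P | h <= stake a j) stake a j)); last first.
  by rewrite lerDl; apply: sumr_ge0.
apply: (@le_trans _ _ (\sum_(j < npools P | h <= stake a j) h)); last by apply: ler_sum.
by rewrite sumr_const /nwinning mulr_natl.
Qed.

Lemma max_ex (Q : nat -> Prop) N m0 : Q m0 -> (forall m, Q m -> (m <= N)%N) ->
  exists k, Q k /\ forall m, Q m -> (m <= k)%N.
Proof.
elim: N m0 => [|N IH] m0 Q0 HQ.
  exists 0%N; have := HQ _ Q0; rewrite leqn0 => /eqP E; subst m0; split=> // m /HQ.
case: (classic (Q N.+1)) => HN.
  by exists N.+1; split.
apply: (IH m0 Q0) => m Qm; have := HQ m Qm; rewrite leq_eqVlt => /orP [/eqP E|//].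
by subst m.
Qed.
Section Gen1.
Variables (R : realType) (T : finType) (A : T -> R) (L : R).

Definition bal (nu : T -> R) :=
  (forall t, 0 <= nu t) /\ \sum_t nu t = L /\
  (forall t t', 0 < nu t -> A t + nu t <= A t' + nu t').

Definition SS (nu : T -> R) := \sum_t (A t + nu t) ^+ 2.

Lemma bal_min nu nu' : bal nu -> (forall t, 0 <= nu' t) -> \sum_t nu' t = L ->
  forall hh, (forall t, hh <= A t + nu' t) -> forall t, hh <= A t + nu t.
Proof.
move=> [nu0 [nuS nuB]] nu'0 nu'S hh Hh t.
rewrite leNgt; apply/negP => Hlt.
have Hle : forall p, nu p <= nu' p.
  move=> p; have [Hp|Hp] := ltP 0 (nu p).
    have := nuB p t Hp; have := Hh p; lra.
  have := nu'0 p; lra.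
have Hst : nu t < nu' t by have := Hh t; lra.
have : \sum_p nu p < \sum_p nu' p.
  rewrite (bigD1 t) //= [X in _ < X](bigD1 t) //=.
  apply: ltr_leD => //; exact: ler_sum.
by rewrite nuS nu'S ltxx.
Qed.

Lemma bal_SS nu nu' : (forall t, 0 <= A t) -> bal nu -> (forall t, 0 <= nu' t) -> \sum_t nu' t = L ->
  SS nu <= SS nu'.
Proof.
move=> A0 [nu0 [nuS nuB]] nu'0 nu'S.
have [w [Hw1 Hw2]] : exists w, (forall t, 0 < nu t -> A t + nu t = w) /\ (forall t, w * (nu' t - nu t) <= (A t + nu t) * (nu' t - nu t)).
  case: (boolP [exists p, 0 < nu p]).
    move=> /existsP [p Hp]; exists (A p + nu p); split.
      by move=> t Ht; apply/le_anti; rewrite nuB // nuB.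
    move=> t; have [Ht|Ht] := ltP 0 (nu t).
      have -> : A t + nu t = A p + nu p by apply/le_anti; rewrite nuB // nuB.
      by [].
    have := nuB p t Hp; have := nu0 t; have := nu'0 t => *.
    have -> : nu t = 0 by lra.
    rewrite !subr0; apply: ler_wpM2r => //; lra.
  rewrite negb_exists => /forallP Hn; exists 0; split.
    by move=> t Ht; have := Hn t; rewrite Ht.
  move=> t; have := Hn t; rewrite -leNgt => Ht.
  have -> : nu t = 0 by have := nu0 t; lra.
  rewrite mul0r subr0 addr0; apply: mulr_ge0 => //.
have : \sum_t 2 * w * (nu' t - nu t) = 0.
  by rewrite -mulr_sumr sumrB nuS nu'S subrr mulr0.
move=> Hz.
rewrite /SS -subr_ge0 -sumrB; apply: (@le_trans _ _ (\sum_t 2 * w * (nu' t - nu t))); first by rewrite Hz.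
apply: ler_sum => t _.
have := Hw2 t; set x := A t + nu t; set d := nu' t - nu t.
have -> : A t + nu' t = x + d by rewrite /x /d; ring.
move=> H; have : 0 <= d ^+ 2 by apply: sqr_ge0.
rewrite !expr2 => H2; nra.
Qed.

End Gen1.
Section Gen2.
Variables (R : realType) (T : finType) (A : T -> R) (L : R).

Lemma bal_set (HL : 0 <= L) m (S : {set T}) : (#|S| <= m)%N -> S != set0 ->
  exists nu : T -> R, exists w : R, (forall t, 0 <= nu t) /\ (forall t, t \notin S -> nu t = 0) /\
   \sum_(t in S) nu t = L /\ (forall t, t \in S -> w <= A t + nu t) /\
   (forall t, t \in S -> 0 < nu t -> A t + nu t = w).
Proof.
elim: m S => [|m IH] S HS HS0.
  by move: HS; rewrite leqn0 cards_eq0 (negbTE HS0).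
case: (set0Pn _ HS0) => t0 Ht0.
have [H1|H2] := leqP #|S| 1.
  have /cards1P [t1 St1] : #|S| == 1%N.
    by rewrite eqn_leq H1 card_gt0.
  exists (fun t => if t == t1 then L else 0), (A t1 + L).
  split; first by move=> t; case: eqP.
  split; first by move=> t; rewrite St1 in_set1 => /negbTE ->.
  split; first by rewrite St1 big_set1 eqxx.
  split; move=> t; rewrite St1 in_set1 => /eqP ->; rewrite eqxx //.
case: (@arg_maxP _ _ T t0 (mem S) A Ht0) => tm Stm0 Hmax.
have Stm : tm \in S := Stm0.
set S' := S :\ tm.
have HS' : (#|S'| <= m)%N by move: HS; rewrite (cardsD1 tm S) Stm.
have HS'0 : S' != set0.
  by rewrite -card_gt0; move: H2; rewrite (cardsD1 tm S) Stm.
have [nu [w [nu0 [nuout [nuS [nuw nueq]]]]]] := IH S' HS' HS'0.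
have nutm : nu tm = 0 by apply: nuout; rewrite /S' setD11.
have [Hw|Hw] := leP w (A tm).
  exists nu, w.
  split=> //.
  split.
    move=> t Ht; apply: nuout; rewrite /S' in_setD1 negb_and Ht orbT //.
  split; first by rewrite (big_setD1 tm) //= nutm add0r.
  split.
    move=> t St; case: (eqVneq t tm) => [->|Hne]; first by rewrite nutm addr0.
    by apply: nuw; rewrite /S' in_setD1 Hne St.
  move=> t St; case: (eqVneq t tm) => [->|Hne]; first by rewrite nutm ltxx.
  by apply: nueq; rewrite /S' in_setD1 Hne St.
have HS'eq : forall t, t \in S' -> nu t = w - A t.
  move=> t St; have Ht : t \in S by move: St; rewrite /S' in_setD1 => /andP [].
  have h2 : A t <= A tm := Hmax t Ht; have h1 := nuw t St.
  have Hp : 0 < nu t by lra.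
  have := nueq t St Hp; lra.
have cS : (0 < #|S|)%N by rewrite card_gt0; apply/set0Pn; exists t0.
have cSR : 0 < (#|S|)%:R :> R by rewrite ltr0n.
set d := (w - A tm) / (#|S|)%:R.
have d0 : 0 <= d by apply: divr_ge0; lra.
have dle : d <= w - A tm.
  rewrite /d ler_pdivrMr //.
  have : 1 <= (#|S|)%:R :> R by rewrite ler1n.
  move=> H; nra.
exists (fun t => if t \in S then w - d - A t else 0), (w - d).
split.
  move=> t; case: ifP => // St; have h3 : A t <= A tm := Hmax t St; lra.
split; first by move=> t /negbTE ->.
split.
  rewrite (eq_bigr (fun t => (w - A t) - d)); last by move=> t ->; ring.
  rewrite sumrB sumr_const (big_setD1 tm) //=.
  rewrite (eq_bigr nu); last by move=> t St; rewrite HS'eq.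
  have e : (w - A tm) / (#|S|)%:R *+ #|S| = w - A tm by rewrite -mulr_natr divfK // lt0r_neq0.
  rewrite nuS /d e.
  ring.
split.
  by move=> t ->; lra.
by move=> t -> _; ring.
Qed.

Lemma bal_ex (HL : 0 <= L) (t0 : T) : exists nu : T -> R,
  (forall t, 0 <= nu t) /\ \sum_t nu t = L /\
  (forall t t', 0 < nu t -> A t + nu t <= A t' + nu t').
Proof.
have HT : [set: T] != set0 by apply/set0Pn; exists t0; rewrite in_setT.
have [nu [w [nu0 [_ [nuS [nuw nueq]]]]]] :=
  @bal_set HL #|[set: T]| [set: T] (leqnn _) HT.
exists nu; split=> //; split.
  by rewrite -nuS; apply: eq_bigl => t; rewrite in_setT.
by move=> t t' Ht; rewrite nueq ?in_setT // nuw ?in_setT.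
Qed.
End Gen2.

Lemma sum_two (R : realType) (T : finType) (F G : T -> R) c j : c != j ->
  (forall x, x != c -> x != j -> F x = G x) ->
  \sum_x F x - \sum_x G x = (F c - G c) + (F j - G j).
Proof.
move=> cj HFG; rewrite -sumrB (bigD1 c) //= (bigD1 j) /=; last by rewrite eq_sym.
rewrite big1 ?addr0 // => x /andP [xc xj]; rewrite HFG // subrr //.
Qed.

Arguments bal {R T}. Arguments SS {R T}.
Arguments bal_min {R T A L nu nu'}. Arguments bal_SS {R T A L nu nu'}.
Arguments bal_ex {R T}.

Definition load (R : realType) n k (a : 'I_n -> R) (s : {ffun 'I_n -> 'I_k}) (t : 'I_k) :=
  \sum_(i < n | s i == t) a i.
Arguments load {R n k}.

Theorem theorem4p1 (R : realType) (n : nat) (a : 'I_n -> R) (L h : R)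
  (hh : 0 < h) (hL : 0 <= L)
  (ha : forall i, 0 < a i /\ a i < h)
  (htot : h <= L + \sum_(i < n) a i) :
  exists opt : nat, is_OPT a L h opt /\ PoS_is a L h opt 1.
Proof.
have a0 : forall i, 0 <= a i by move=> i; have [] := ha i; lra.
set N := Num.Def.archi_bound ((L + \sum_i a i) / h).
have Hbound : forall P, valid_partition L P -> (nwinning a h P <= N)%N.
  move=> P HP; have Hw := @win_bound R n a L h P a0 HP.
  have : (nwinning a h P)%:R < N%:R :> R.
    apply: (@le_lt_trans _ _ ((L + \sum_i a i) / h)).
      by rewrite ler_pdivlMr.
    apply: archi_boundP; apply: divr_ge0; last lra.
    by apply: addr_ge0 => //; apply: sumr_ge0.
  by rewrite ltr_nat => /ltnW.
pose P1 := @Partition R n 1 (fun _ => L) (fun _ => ord0).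
have P1v : valid_partition L P1.
  by split => [//|]; rewrite big_ord1.
have P1w : (0 < nwinning a h P1)%N.
  apply/card_gt0P; exists ord0; rewrite inE /= /stake /=.
  by rewrite (eq_bigl predT) // => i; rewrite /= ord1.
have [k [[P0 [P0v P0k]] kmax]] := @max_ex (fun m => exists P, valid_partition L P /\ nwinning a h P = m)
   N _ (ex_intro _ P1 (conj P1v erefl))
   (fun m '(ex_intro P (conj Pv Pm)) => eq_ind _ (fun x => (x <= N)%N) (Hbound P Pv) m Pm).
have k0 : (0 < k)%N by have := kmax _ (ex_intro _ P1 (conj P1v erefl)); apply: leq_trans.
set W := [set j | h <= stake a (P:=P0) j].
have HWk : #|W| = k by rewrite -P0k /nwinning cardsE.
have [x0 x0W] : exists x0, x0 \in W by apply/set0Pn; rewrite -card_gt0 HWk.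
pose f (j : 'I_(npools P0)) : 'I_k := cast_ord HWk (enum_rank_in x0W j).
pose s0 := [ffun i => f (pool_of P0 i)].
pose nu0 (t : 'I_k) := \sum_(j | f j == t) nmass P0 j.
have [P0m P0S] := P0v.
have nu00 : forall t, 0 <= nu0 t by move=> t; apply: sumr_ge0.
have nu0S : \sum_t nu0 t = L.
  by rewrite -P0S [RHS](partition_big f predT).
have st0 : forall j : 'I_(npools P0), 0 <= stake a j.
  by move=> j; rewrite /stake; apply: addr_ge0 => //; apply: sumr_ge0.
have nu0h : forall t, h <= load a s0 t + nu0 t.
  move=> t.
  have -> : load a s0 t + nu0 t = \sum_(j | f j == t) stake a j.
    rewrite /stake big_split /= addrC; congr (_ + _).
    rewrite /load (partition_big (pool_of P0) (fun j => f j == t)); last by move=> i; rewrite ffunE.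
    apply: eq_bigr => j /eqP fj; apply: eq_bigl => i; rewrite ffunE.
    by case: (eqVneq (pool_of P0 i) j) => [->|_]; rewrite ?fj ?eqxx // andbF.
  set jt := enum_val (cast_ord (esym HWk) t).
  have jtW : jt \in W by apply: enum_valP.
  have fjt : f jt == t by rewrite /f /jt enum_valK_in cast_ordKV.
  rewrite (bigD1 jt) //=.
  have : h <= stake a jt by move: jtW; rewrite inE.
  have : 0 <= \sum_(i | (f i == t) && (i != jt)) stake a i by apply: sumr_ge0.
  lra.
pose t0 : 'I_k := Ordinal k0.
have load0 : forall (s : {ffun 'I_n -> 'I_k}) t, 0 <= load a s t.
  by move=> s t; apply: sumr_ge0.
have Hex : forall s : {ffun 'I_n -> 'I_k}, exists nu, bal (load a s) L nu.
  by move=> s; apply: bal_ex.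
pose nuf (s : {ffun 'I_n -> 'I_k}) := proj1_sig (constructive_indefinite_description _ (Hex s)).
have nufP : forall s, bal (load a s) L (nuf s).
  by move=> s; rewrite /nuf; case: constructive_indefinite_description.
pose good (s : {ffun 'I_n -> 'I_k}) := [forall t, h <= load a s t + nuf s t].
have good0 : good s0.
  apply/forallP => t; apply: (bal_min (nufP s0) nu00 nu0S h nu0h).
pose Phi (s : {ffun 'I_n -> 'I_k}) := SS (load a s) (nuf s).
case: (@arg_minP _ _ _ s0 good Phi good0) => ss goodss ssmin.
have ssh : forall t, h <= load a ss t + nuf ss t by apply/forallP.
have [nus0 [nusS nusB]] := nufP ss.
have stab : forall i j, j != ss i ->
    load a ss (ss i) + nuf ss (ss i) <= load a ss j + nuf ss j + a i.
  move=> i j jC; set C := ss i.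
  have Cj : C != j by rewrite eq_sym.
  rewrite leNgt; apply/negP => Hlt.
  pose s' := [ffun x => if x == i then j else ss x].
  have ls' : forall t, load a s' t =
      load a ss t + (if t == j then a i else 0) - (if t == C then a i else 0).
    move=> t; rewrite /load big_mkcond [X in _ = X + _ - _]big_mkcond /=.
    rewrite (bigD1 i) //= [X in _ = X + _ - _](bigD1 i) //=.
    rewrite (eq_bigr (fun x => if ss x == t then a x else 0)); last first.
      by move=> x /negbTE xi; rewrite ffunE xi.
    rewrite ffunE eqxx -/C.
    case: (eqVneq t j) => [Etj|tj]; case: (eqVneq t C) => [tC|tC].
    - by move: jC; rewrite -Etj tC eqxx.
    - by ring.
    - by ring.
    - by ring.
  have Hs' : forall t, h <= load a s' t + nuf ss t.
    move=> t; rewrite ls'.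
    case: (eqVneq t j) => [Etj|tj]; case: (eqVneq t C) => [tC|tC].
    - by move: jC; rewrite -Etj tC eqxx.
    - by subst t; have := ssh j; have := a0 i; lra.
    - by subst t; have := ssh j; have := a0 i; lra.
    - by have := ssh t; lra.
  have goods' : good s'.
    by apply/forallP => t; apply: (bal_min (nufP s') nus0 nusS h Hs').
  have H1 : Phi s' <= SS (load a s') (nuf ss).
    by apply: (bal_SS (load0 s') (nufP s') nus0 nusS).
  have H2 : SS (load a s') (nuf ss) < SS (load a ss) (nuf ss).
    rewrite -subr_lt0 /SS (@sum_two R _ _ _ C j Cj); last first.
      move=> x xC xj; rewrite ls' (negbTE xC) (negbTE xj); congr (_ ^+ 2); ring.
    rewrite !ls' !eqxx (negbTE jC) eq_sym (negbTE jC).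
    have := ha i; move: Hlt; rewrite !expr2 => *; nra.
  have := ssmin s' goods'; rewrite -/(Phi ss).
  have : Phi ss = SS (load a ss) (nuf ss) by [].
  lra.
pose Pst := @Partition R n k (nuf ss) (fun i => ss i).
have stP : forall t : 'I_k, stake a (P:=Pst) t = load a ss t + nuf ss t.
  by move=> t; rewrite /stake /= addrC.
have rho1 : forall x, h <= x -> rho h x = 1 by move=> x hx; rewrite /rho hx.
have Pstv : valid_partition L Pst by split.
have PstN : nash_eq a L h Pst.
  split => //; split; first by move=> j; rewrite stP.
  split.
    move=> i j /= jC; rewrite /atomic_payment /= !stP.
    have := stab i j jC; have := ssh j; have := ssh (ss i); have := ha i => [[ai1 ai2]] H1 H2 H3.
    rewrite !rho1; [|lra|lra]; rewrite !mulr1.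
    apply: ler_wpM2l; first lra.
    rewrite lef_pV2 ?posrE; lra.
  split.
    move=> i; rewrite /rho; have [ai1 ai2] := ha i.
    have -> : (h <= a i) = false by apply/negbTE; rewrite -ltNge.
    rewrite mulr0 /atomic_payment stP rho1 ?ssh // mulr1.
    apply: divr_ge0; [lra|]; have := ssh (ss i); lra.
  move=> j j' /= Hj; rewrite !stP !rho1 ?ssh // !div1r.
  have := nusB j j' Hj; have := ssh j; have := ssh j' => H1 H2 H3.
  rewrite lef_pV2 ?posrE; lra.
have PstW : nwinning a h Pst = k.
  rewrite /nwinning -[RHS]card_ord; apply: eq_card => t; rewrite inE stP ssh //.
exists k; split.
  split; first by exists P0.
  by move=> P HP; apply: kmax; exists P.
split.
  exists Pst; split => //; rewrite PstW divff // pnatr_eq0 -lt0n //.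
move=> P [HPv [HPw _]].
have Wk : (nwinning a h P <= k)%N by apply: kmax; exists P.
have W0 : (0 < nwinning a h P)%N.
  case: (pickP (fun j : 'I_(npools P) => true)) => [j _|Hn].
    by apply/card_gt0P; exists j; rewrite inE HPw.
  have := @total_stake R n a P; rewrite big_pred0 //; case: HPv => _ ->.
  lra.
rewrite ler_pdivlMr ?ltr0n // mul1r ler_nat //.
Qed.
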